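(* Let $\mathcal G$ be an input-output network with input nodes $\iota_1,\dots,\iota_n$ and output node $o$, with the other nodes partitioned into $\sigma$-nodes (upstream from $o$ and downstream from at least one input node), $d$-nodes (not downstream from any input node) and $u$-nodes (downstream from at least one input node but not upstream from $o$). Consider an admissible system $$\dot x_{\iota_m}=f_{\iota_m}(x_{\iota},x_\sigma,x_d,x_o,\mathcal I),\quad \dot x_\sigma=f_\sigma(x_\iota,x_\sigma,x_d,x_o),\quad \dot x_u=f_u(x_\iota,x_\sigma,x_u,x_d,x_o),\quad \dot x_d=f_d(x_d),\quad \dot x_o=f_o(x_\iota,x_\sigma,x_d,x_o)$$ with a smooth family of linearly stable equilibria $\tilde X(\mathcal I)$ near $\mathcal I_0$, whose $d$-component is $x_d^*$ and whose output component is the input-output function $x_o(\mathcal I)$. Let $x_o^c(\mathcal I)$ be the input-output function (output component of the corresponding family of linearly stable equilibria) of the associated core admissible system obtained by freezing $x_d$ at $x_d^*$: $$\dot x_{\iota_m}=f_{\iota_m}(x_\iota,x_\sigma,x_d^*,x_o,\mathcal I),\quad \dot x_\sigma=f_\sigma(x_\iota,x_\sigma,x_d^*,x_o),\quad \dot x_o=f_o(x_\iota,x_\sigma,x_d^*,x_o).$$ Then $x_o^c$ has a point of infinitesimal homeostasis at $\mathcal I_0$ (i.e. $(x_o^c)'(\mathcal I_0)=0$) if and only if $x_o$ has a point of infinitesimal homeostasis at $\mathcal I_0$ (i.e. $x_o'(\mathcal I_0)=0$).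
   Context: A node $b$ is downstream from $a$ (and $a$ upstream from $b$) if there is a directed path from $a$ to $b$; every node is upstream and downstream from itself. An admissible system assigns a real variable to each node, is smooth, only the input-node equations depend on the scalar input parameter $\mathcal I$, $\partial f_{\iota_m}/\partial\mathcal I\neq0$, and $\partial f_j/\partial x_\ell\equiv0$ unless there is an arrow $\ell\to j$. An equilibrium is linearly stable if all eigenvalues of the Jacobian there have negative real part. *)

(* Defs.v *)
From HB Require Import structures.
From mathcomp Require Import all_boot all_order all_algebra.
From mathcomp Require Import all_classical all_reals all_analysis.
From mathcomp Require Import complex.
Set Implicit Arguments. Unset Strict Implicit. Unset Printing Implicit Defensive.
Import Order.TTheory GRing.Theory Num.Theory.
Import numFieldNormedType.Exports.
Local Open Scope classical_set_scope.
Local Open Scope ring_scope.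

Fixpoint Ck {R : realType} {U V : normedModType R} (k : nat)
    (A : set U) (f : U -> V) : Prop :=
  match k with
  | 0 => forall x, A x -> {for x, continuous f}
  | k'.+1 => (forall x, A x -> differentiable f x) /\
             (forall v : U, Ck k' A ('D_v f))
  end.

Definition smooth_on {R : realType} {U V : normedModType R}
    (A : set U) (f : U -> V) : Prop := forall k, Ck k A f.

(* Nodes are 'I_N; [e l j] means there is an arrow l -> j.
   [connect e a b] : b is downstream from a (directed path, reflexive). *)
Section Network.
Variables (N : nat) (e : rel 'I_N) (inputs : {set 'I_N}) (o : 'I_N).

Definition downstream_of_input (j : 'I_N) : bool :=
  [exists m in inputs, connect e m j].

Definition io_network : Prop :=
  [/\ o \notin inputs, (0 < #|inputs|)%N & forall m, m \in inputs -> connect e m o].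

Definition regulatory (j : 'I_N) : bool := (j \notin inputs) && (j != o).

Definition sigma_node (j : 'I_N) : bool :=
  [&& regulatory j, connect e j o & downstream_of_input j].
Definition d_node (j : 'I_N) : bool :=
  regulatory j && ~~ downstream_of_input j.
Definition u_node (j : 'I_N) : bool :=
  [&& regulatory j, downstream_of_input j & ~~ connect e j o].

Definition core_set : {set 'I_N} :=
  [set j | (j \in inputs) || (j == o) || sigma_node j].

Definition core_node (i : 'I_#|core_set|) : 'I_N := enum_val i.
End Network.

Section Systems.
Variables (R : realType) (N : nat).

(* Jacobian (with respect to the state) of F at (x, I):
   entry (j, l) = partial f_j / partial x_l *)
Definition jacobian (F : 'rV[R]_N -> R -> 'rV[R]_N) (x : 'rV[R]_N) (I : R)
  : 'M[R]_N :=
  \matrix_(j, l) ('D_(delta_mx 0 l) (fun y : 'rV[R]_N => F y I) x) 0 j.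

Definition dfdI (F : 'rV[R]_N -> R -> 'rV[R]_N) (j : 'I_N) (x : 'rV[R]_N)
    (I : R) : R :=
  derive (fun J : R => F x J 0 j) I 1.

Definition admissible (e : rel 'I_N) (inputs : {set 'I_N})
    (F : 'rV[R]_N -> R -> 'rV[R]_N) : Prop :=
  [/\ smooth_on setT (fun p : 'rV[R]_N * R => F p.1 p.2),
      (forall j, j \notin inputs -> forall x I I', F x I 0 j = F x I' 0 j),
      (forall m, m \in inputs -> exists x I, dfdI F m x I != 0) &
      (forall j l, l != j -> ~~ e l j ->
         forall x I, jacobian F x I j l = 0)].

Definition equilibrium (F : 'rV[R]_N -> R -> 'rV[R]_N) (x : 'rV[R]_N) (I : R)
  : Prop := F x I = 0.

Definition mx_stable (J : 'M[R]_N) : Prop :=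
  forall z : complex.complex R,
    @eigenvalue (complex.complex R) N
      (map_mx (fun r : R => complex.Complex r 0) J) z ->
    complex.Re z < 0.

Definition linearly_stable (F : 'rV[R]_N -> R -> 'rV[R]_N) (x : 'rV[R]_N)
  (I : R) : Prop := mx_stable (jacobian F x I).

Definition stable_family (F : 'rV[R]_N -> R -> 'rV[R]_N) (X : R -> 'rV[R]_N)
    (I0 : R) : Prop :=
  exists A : set R, [/\ open A, A I0, smooth_on A X &
    forall I, A I -> equilibrium F (X I) I /\ linearly_stable F (X I) I].
End Systems.

Section Core.
Variables (R : realType) (N : nat) (e : rel 'I_N) (inputs : {set 'I_N})
  (o : 'I_N).
Local Notation K := #|core_set e inputs o|.
Local Notation cn := (@core_node N e inputs o).

(* full state obtained from a core state [y]; non-core coordinates are frozen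
   at the values of the reference state [base] (for d-nodes: x_d^*; the core
   vector field does not depend on the u-coordinates) *)
Definition embed_core (base : 'rV[R]_N) (y : 'rV[R]_K) : 'rV[R]_N :=
  \row_j (if [pick i | cn i == j] is Some i then y 0 i else base 0 j).

Definition core_field (F : 'rV[R]_N -> R -> 'rV[R]_N) (base : 'rV[R]_N)
  : 'rV[R]_K -> R -> 'rV[R]_K :=
  fun y I => \row_i F (embed_core base y) I 0 (cn i).

Definition restrict_core (x : 'rV[R]_N) : 'rV[R]_K := \row_i x 0 (cn i).

Definition core_output (y : 'rV[R]_K) : R :=
  if [pick i | cn i == o] is Some i then y 0 i else 0.
End Core.

Arguments downstream_of_input {N} e inputs j.
Arguments io_network {N} e inputs o.
Arguments regulatory {N} inputs o j.
Arguments sigma_node {N} e inputs o j.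
Arguments d_node {N} e inputs o j.
Arguments u_node {N} e inputs o j.
Arguments core_set {N} e inputs o.
Arguments core_node {N} e inputs o i.
Arguments embed_core {R N} e inputs o base y.
Arguments core_field {R N} e inputs o F base y I.
Arguments restrict_core {R N} e inputs o x.
Arguments core_output {R N} e inputs o y.

(* Main.v *)
Require Import Defs.
From HB Require Import structures.
From mathcomp Require Import all_boot all_order all_algebra.
From mathcomp Require Import all_classical all_reals all_analysis.
Import Order.TTheory GRing.Theory Num.Theory.
Import numFieldNormedType.Exports.
Local Open Scope classical_set_scope.
Local Open Scope ring_scope.
Section C.
Variables (R : realType) (N : nat) (F : 'rV[R]_N -> R -> 'rV[R]_N).
Let Phi := fun p : 'rV[R]_N * R => F p.1 p.2.

Lemma derive_congr (V1 V2 : normedModType R) (W : normedModType R)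
  (f : V1 -> W) (g : V2 -> W) a b v w :
  (forall h : R, f (h *: v + a) = g (h *: w + b)) -> 'D_v f a = 'D_w g b.
Proof.
move=> H; rewrite /derive.
have H0 := H 0; rewrite !scale0r !add0r in H0.
suff -> : (fun h : R => h^-1 *: ((f \o shift a) (h *: v) - f a)) =
  (fun h => h^-1 *: ((g \o shift b) (h *: w) - g b)) by [].
by apply/funext => h /=; rewrite H H0.
Qed.

Lemma jacE x I j l : differentiable Phi (x, I) ->
  Defs.jacobian F x I j l = ('d Phi (x, I) (delta_mx 0 l, 0)) 0 j.
Proof.
move=> dP; rewrite /Defs.jacobian mxE.
rewrite -(@deriveE R _ _ Phi (x, I) (delta_mx 0 l, 0) dP).
congr (_ 0 j); rewrite (@derive_congr _ _ _ (F^~ I) Phi x (x,I) (delta_mx 0 l) (delta_mx 0 l,0)) // => h.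
by rewrite /Phi /= scaler0 add0r.
Qed.

Lemma dfdIE x I j : differentiable Phi (x, I) ->
  dfdI F j x I = ('d Phi (x, I) (0, 1)) 0 j.
Proof.
move=> dP; rewrite -deriveE // derive_mx; last exact: diff_derivable.
rewrite mxE /dfdI (@derive_congr _ _ _ (fun J => F x J 0 j) (fun p => Phi p 0 j) I (x,I) 1 (0,1)) // => h.
by rewrite /Phi /= scaler0 add0r.
Qed.

Lemma chain (Y : R -> 'rV[R]_N) (I0 : R) :
  (forall p, differentiable Phi p) -> derivable Y I0 1 -> forall j,
  'D_1 (fun I => F (Y I) I 0 j) I0 =
  \sum_l Defs.jacobian F (Y I0) I0 j l * 'D_1 (fun I => Y I 0 l) I0
  + dfdI F j (Y I0) I0.
Proof.
move=> dP dY j.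
have dY' : differentiable Y I0 by apply/derivable1_diffP.
have did : differentiable (@id R) I0 by exact: ex_diff.
have dpr : differentiable (fun I => (Y I, id I)) I0 := differentiable_pair dY' did.
pose G := Phi \o (fun I => (Y I, id I)).
have dG : differentiable G I0 := differentiable_comp dpr (dP _).
have E1 : ('D_1 G I0) 0 j = 'D_1 (fun I => F (Y I) I 0 j) I0.
  have dGd : derivable G I0 1 := @diff_derivable _ _ _ G I0 1 dG.
  by rewrite (derive_mx dGd) mxE.
rewrite -E1 deriveE // /G diff_comp // diff_pair // /=.
rewrite -(@deriveE _ _ _ Y I0 1 dY') derive_mx; last exact: diff_derivable.
have -> : 'd (@id R) I0 1 = 1.
  by rewrite diff_val.
set a := \matrix_(i, l) _.
have -> : (a, 1) = (a, 0) + (0, 1) :> 'rV[R]_N * R.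
  by apply: injective_projections => /=; rewrite ?addr0 ?add0r.
rewrite linearD mxE dfdIE //; congr (_ + _).
have -> : (a, 0) = \sum_l a 0 l *: ((delta_mx 0 l, 0) : 'rV[R]_N * R).
  rewrite {1}(row_sum_delta a).
  elim/big_rec2: _ => [//|l u v _ <-].
  by apply: injective_projections => /=; rewrite ?scaler0 ?addr0.
rewrite linear_sum summxE; apply: eq_bigr => l _.
by rewrite linearZ mxE jacE // mulrC /a mxE.
Qed.
End C.

Lemma derive_loc0 (R : realType) (f : R -> R) (A : set R) (I0 : R) :
  open A -> A I0 -> (forall I, A I -> f I = 0) -> 'D_1 f I0 = 0.
Proof.
move=> oA AI0 f0.
have nA : nbhs I0 A by apply: open_nbhs_nbhs; split.
have nA0 := (nbhs0P _ _).1 nA.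
have nA1 : \forall e \near 0^', A (I0 + e) by apply: nbhs_dnbhs.
rewrite /derive; apply/lim_near_cst => //=.
near=> h.
rewrite f0 // ?f0 // ?subrr ?scaler0 //.
by rewrite scaler1 addrC; near: h.
Unshelve. all: by end_near.
Qed.

Section G.
Variables (N : nat) (e : rel 'I_N) (inputs : {set 'I_N}) (o : 'I_N).
Hypothesis io : io_network e inputs o.

Lemma core_dsi j : j \in core_set e inputs o -> downstream_of_input e inputs j.
Proof.
case: io => _ /card_gt0P [m mi] iot.
rewrite inE -orbA => /or3P [ji | /eqP -> | /and3P [_ _ //]].
- by apply/existsP; exists j; rewrite ji connect0.
- by apply/existsP; exists m; rewrite mi iot.
Qed.

Lemma dsi_step l j : downstream_of_input e inputs l -> e l j ->
  downstream_of_input e inputs j.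
Proof.
move=> /existsP [m /andP [mi ml]] elj; apply/existsP; exists m.
by rewrite mi (connect_trans ml) // connect1.
Qed.

Lemma u_step l j : u_node e inputs o l -> e l j -> u_node e inputs o j.
Proof.
case: io => onI _ iot.
move=> /and3P [_ dl nlo] elj; apply/and3P; split.
- apply/andP; split.
  + apply/negP => ji; move/negP: nlo; apply.
    by rewrite (connect_trans (connect1 elj)) // iot.
  + apply/eqP => ejo; move/negP: nlo; apply.
    by rewrite -ejo connect1.
- exact: dsi_step dl elj.
- apply/negP => cjo; move/negP: nlo; apply.
  by rewrite (connect_trans (connect1 elj)).
Qed.

Lemma core_step_d l j : l \in core_set e inputs o -> e l j ->
  ~~ d_node e inputs o j.
Proof.
move=> lc elj; rewrite /d_node negb_and negbK.
by rewrite (@dsi_step l j (@core_dsi l lc) elj) orbT.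
Qed.

Lemma core_nonu j : j \in core_set e inputs o -> ~~ u_node e inputs o j.
Proof.
rewrite inE /u_node /sigma_node /regulatory.
by case: (j \in inputs); case: (j == o); case: (connect e j o);
   case: (downstream_of_input e inputs j).
Qed.

Lemma nonu_noncore_d j : ~~ u_node e inputs o j ->
  j \notin core_set e inputs o -> d_node e inputs o j.
Proof.
rewrite inE /u_node /d_node /sigma_node /regulatory.
by case: (j \in inputs); case: (j == o); case: (connect e j o);
   case: (downstream_of_input e inputs j).
Qed.

Lemma d_noninput j : d_node e inputs o j -> j \notin inputs.
Proof. by case/andP => /andP []. Qed.

Lemma d_noncore j : d_node e inputs o j -> j \notin core_set e inputs o.
Proof.
move=> /andP [_ nd]; apply/negP => /(@core_dsi j); exact/negP.
Qed.

Lemma o_core : o \in core_set e inputs o.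
Proof. by rewrite inE eqxx orbT. Qed.

Lemma o_nonu : ~~ u_node e inputs o o.
Proof. exact: core_nonu o_core. Qed.

Lemma pick_core j : j \in core_set e inputs o ->
  exists i, [pick i | core_node e inputs o i == j] = Some i /\ core_node e inputs o i = j.
Proof.
move=> jc; case: pickP => [i /eqP <-|H]; first by exists i.
have := H (enum_rank_in jc j); rewrite /core_node enum_rankK_in // eqxx.
by [].
Qed.
End G.
From mathcomp Require Import complex.

Lemma stable_inj (R : realType) N (J : 'M[R]_N) : mx_stable J ->
  forall y : 'rV[R]_N, y *m J = 0 -> y = 0.
Proof.
move=> st y yJ; apply/eqP; apply/negPn/negP => y0.
have : eigenvalue (map_mx (fun r : R => complex.Complex r 0) J) 0.
  apply/eigenvalueP; exists (map_mx (real_complex R) y).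
    by rewrite -map_mxM yJ map_mx0 scale0r.
  by rewrite map_mx_eq0.
by move/st; rewrite ltxx.
Qed.

Lemma block_nonsing (R : realType) N (J : 'M[R]_N) (U : pred 'I_N) :
  mx_stable J -> (forall j l, U l -> ~~ U j -> J j l = 0) ->
  forall w : 'rV[R]_N, (forall l, U l -> w 0 l = 0) ->
  (forall j, ~~ U j -> \sum_l J j l * w 0 l = 0) -> w = 0.
Proof.
move=> st J0 w wU wJ.
pose J' := \matrix_(j, l) if U j then (l == j)%:R else J j l.
have wJ' : w *m J'^T = 0.
  apply/rowP => j; rewrite !mxE.
  case Uj: (U j).
  - rewrite (bigD1 j) //= !mxE Uj eqxx mulr1 wU // big1 ?addr0 // => l lj.
    by rewrite !mxE Uj (negbTE lj) mulr0.
  - rewrite -[RHS](wJ j (negbT Uj)); apply: eq_bigr => l _.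
    by rewrite !mxE Uj mulrC.
apply/eqP; apply/negPn/negP => w0.
have : \det J'^T == 0 by apply/det0P; exists w.
rewrite det_tr => /det0P [y y0 yJ'].
have yU : forall l, U l -> y 0 l = 0.
  move=> l Ul; have := congr1 (fun M : 'rV[R]_N => M 0 l) yJ'; rewrite !mxE.
  rewrite (bigD1 l) //= !mxE Ul eqxx mulr1 big1 ?addr0 // => j jl.
  rewrite !mxE; case Uj: (U j); first by rewrite eq_sym (negbTE jl) mulr0.
  by rewrite J0 ?mulr0 // Uj.
have yJ : y *m J = 0.
  rewrite -yJ'; apply/rowP => l; rewrite !mxE; apply: eq_bigr => j _.
  rewrite !mxE; case Uj: (U j); last by [].
  by rewrite yU // !mul0r.
by move/negP: y0; apply; rewrite (@stable_inj R N J st y yJ).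
Qed.

Theorem theorem3p2 (R : realType) (N : nat) (e : rel 'I_N)
    (inputs : {set 'I_N}) (o : 'I_N)
    (F : 'rV[R]_N -> R -> 'rV[R]_N) (Xt : R -> 'rV[R]_N)
    (Xc : R -> 'rV[R]_#|core_set e inputs o|) (I0 : R) :
  io_network e inputs o ->
  admissible e inputs F ->
  stable_family F Xt I0 ->
  (* Xc: the family of linearly stable equilibria of the core system
     (x_d frozen at x_d^* = d-component of Xt I0) corresponding to Xt *)
  stable_family (core_field e inputs o F (Xt I0)) Xc I0 ->
  Xc I0 = restrict_core e inputs o (Xt I0) ->
  (derive (fun I : R => core_output e inputs o (Xc I)) I0 1 = 0 <->
   derive (fun I : R => Xt I 0 o) I0 1 = 0).
Proof.
move=> io [smF indepI _ Jz] [At [oAt AtI0 smXt eqXt]] [Ac [oAc AcI0 smXc eqXc]] XcI0.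
set x0 := Xt I0.
have dPhi : forall p, differentiable (fun p : 'rV[R]_N * R => F p.1 p.2) p.
  by move=> p; have [d _] := smF 1%N; exact: d.
have dXt : derivable Xt I0 1.
  by have [d _] := smXt 1%N; exact/diff_derivable/d.
have dXc : derivable Xc I0 1.
  by have [d _] := smXc 1%N; exact/diff_derivable/d.
pose cn := core_node e inputs o.
pose Y I := embed_core e inputs o x0 (Xc I).
have YI0 : Y I0 = x0.
  apply/rowP => l; rewrite /Y /embed_core mxE; case: pickP => [i /eqP <-|_] //.
  by rewrite XcI0 /restrict_core mxE.
have YE : forall i l, (fun I => Y I i l) = fun I =>
    if [pick k | cn k == l] is Some k then Xc I 0 k else x0 0 l.
  by move=> i l; apply/funext => I; rewrite /Y /embed_core mxE.
have dY : derivable Y I0 1.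
  apply/derivable_mxP => i l; rewrite YE; case: pickP => [k _|_].
    by move/derivable_mxP: dXc => /(_ 0 k).
  exact: derivable_cst.
pose a l := 'D_1 (fun I => Xt I 0 l) I0.
pose yv l := 'D_1 (fun I => Y I 0 l) I0.
have yvE : forall l, yv l = if [pick k | cn k == l] is Some k then
    'D_1 (fun I => Xc I 0 k) I0 else 0.
  move=> l; rewrite /yv YE; case: pickP => [k _|_] //.
  exact: derive_cst.
pose J := Defs.jacobian F x0 I0.
pose b j := dfdI F j x0 I0.
have EqT : forall j, \sum_l J j l * a l + b j = 0.
  move=> j; rewrite -(@chain R N F Xt I0 dPhi dXt j).
  apply: (@derive_loc0 R _ At I0 oAt AtI0) => I AI.
  by have [eq _] := eqXt I AI; rewrite /equilibrium in eq; rewrite eq mxE.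
have EqC : forall i, \sum_l J (cn i) l * yv l + b (cn i) = 0.
  move=> i; have := @chain R N F Y I0 dPhi dY (cn i); rewrite YI0 => <-.
  apply: (@derive_loc0 R _ Ac I0 oAc AcI0) => I AI.
  have [eq _] := eqXc I AI; rewrite /equilibrium in eq.
  have := congr1 (fun M : 'rV[R]_#|core_set e inputs o| => M 0 i) eq.
  by rewrite /core_field !mxE.
pose U := u_node e inputs o.
pose w := \row_l (if U l then 0 else a l - yv l).
have J0 : forall j l, U l -> ~~ U j -> J j l = 0.
  move=> j l Ul Uj; apply: Jz.
    by apply/eqP => lj; move: Uj; rewrite -lj Ul.
  by apply/negP => elj; move/negP: Uj; apply; exact: (@u_step N e inputs o io l j Ul elj).
have w0 : w = 0.
  apply: (@block_nonsing R N J U) => //.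
  - by have [_ st] := eqXt I0 AtI0.
  - by move=> l Ul; rewrite mxE Ul.
  - move=> j Uj.
    have -> : \sum_l J j l * w 0 l = \sum_l J j l * a l - \sum_l J j l * yv l.
      rewrite -sumrB; apply: eq_bigr => l _; rewrite [X in _ * X]mxE.
      case Ul: (U l) => /=; last by rewrite mulrBr.
      by rewrite J0 // ?Uj // !mul0r subr0.
    case jc: (j \in core_set e inputs o).
      have [i [_ <-]] := @pick_core N e inputs o j jc.
      have := EqT (cn i); have := EqC i.
      by move=> /eqP; rewrite addr_eq0 => /eqP -> /eqP; rewrite addr_eq0 => /eqP ->; rewrite subrr.
    have dj : d_node e inputs o j by apply: (@nonu_noncore_d N e inputs o j) => //; rewrite jc.
    have bj : b j = 0.
      rewrite /b /dfdI.
      have -> : (fun J => F x0 J 0 j) = cst (F x0 I0 0 j).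
        by apply/funext => I; rewrite (indepI j (@d_noninput N e inputs o j dj) x0 I I0).
      exact: derive_cst.
    have := EqT j; rewrite bj addr0 => ->.
    rewrite big1 ?subr0 // => l _; rewrite yvE; case: pickP => [k /eqP kl|_]; last by rewrite mulr0.
    have lc : l \in core_set e inputs o by rewrite -kl /cn /core_node enum_valP.
    rewrite Jz ?mul0r //.
      by apply/eqP => lj; move: (@d_noncore N e inputs o io j dj); rewrite -lj lc.
    by apply/negP => elj; move: (@core_step_d N e inputs o io l j lc elj); rewrite dj.
have ao : a o = yv o.
  have := congr1 (fun M : 'rV[R]_N => M 0 o) w0; rewrite !mxE.
  by rewrite /U (negbTE (@o_nonu N e inputs o)) => /eqP; rewrite subr_eq0 => /eqP.
have [io' [Hp _]] := @pick_core N e inputs o o (@o_core N e inputs o).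
have LHS : derive (fun I : R => core_output e inputs o (Xc I)) I0 1 = yv o.
  by rewrite yvE /core_output Hp.
by rewrite LHS -ao.
Qed.
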